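(* For all $\alpha,\beta\in\mathbb{R}$, let $\mathfrak{g}=\mathfrak{g}(\alpha,\beta)$ with center $\mathfrak{z}$, and let $\ell=e_{11}^*\in\mathfrak{g}^*$ be the linear form with $\ell(e_{11})=1$ and $\ell(e_i)=0$ for $i\le 10$. Then $\mathfrak{g}(\ell)=\mathfrak{z}$.
   Context: For $\alpha,\beta\in\mathbb{R}$, $\mathfrak{g}(\alpha,\beta)$ is the $11$-dimensional real Lie algebra with basis $e_1,\dots,e_{11}$ whose nonzero brackets (up to skew-symmetry) are: $[e_1,e_i]=e_{i+1}$ for $2\le i\le 10$; $[e_2,e_3]=e_5+\alpha e_6$, $[e_2,e_4]=e_6+\alpha e_7$, $[e_2,e_5]=-e_7+(\alpha-\beta)e_8$, $[e_2,e_6]=-3e_8+(\alpha-2\beta)e_9$, $[e_2,e_7]=-2e_9-\tfrac14(5\alpha+7\beta)e_{10}+\tfrac1{16}(27\alpha^2+12\alpha\beta+\beta^2)e_{11}$, $[e_2,e_8]=2e_{10}-\tfrac14(23\alpha+\beta)e_{11}$, $[e_2,e_9]=-e_{11}$; $[e_3,e_4]=2e_7+\beta e_8$, $[e_3,e_5]=2e_8+\beta e_9$, $[e_3,e_6]=-e_9+\tfrac14(9\alpha-\beta)e_{10}-\tfrac1{16}(27\alpha^2+12\alpha\beta+\beta^2)e_{11}$, $[e_3,e_7]=-4e_{10}+\tfrac32(3\alpha-\beta)e_{11}$, $[e_3,e_8]=3e_{11}$; $[e_4,e_5]=3e_9-\tfrac14(9\alpha-5\beta)e_{10}+\tfrac1{16}(27\alpha^2+12\alpha\beta+\beta^2)e_{11}$,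 $[e_4,e_6]=3e_{10}-\tfrac14(9\alpha-5\beta)e_{11}$, $[e_4,e_7]=-7e_{11}$; $[e_5,e_6]=10e_{11}$; all other brackets $[e_i,e_j]$ with $i<j$ are zero. Its center is $\mathfrak{z}=\mathrm{span}\{e_{11}\}$. For $\ell\in\mathfrak{g}^*$, $\mathfrak{g}(\ell)=\{y\in\mathfrak{g}:\ell([x,y])=0 \text{ for all } x\in\mathfrak{g}\}$. *)

(* Defs.v *)
From HB Require Import structures.
From mathcomp Require Import all_boot all_order all_algebra.
Set Implicit Arguments. Unset Strict Implicit. Unset Printing Implicit Defensive.
Import Order.TTheory GRing.Theory Num.Theory.
Local Open Scope ring_scope.

(* Vectors of g(alpha,beta) are row vectors 'rV[R]_11; the basis vector e_k
   (k = 1..11 in the paper) is basis k = delta_mx 0 (k-1). *)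
Definition basis {R : realFieldType} (k : nat) : 'rV[R]_11 :=
  delta_mx 0 (inord k.-1).

(* Structure constants [e_i, e_j] for 1 <= i < j <= 11 (paper indexing). *)
Definition br_up {R : realFieldType} (a b : R) (i j : nat) : 'rV[R]_11 :=
  let e := @basis R in
  let q := (27 * a ^+ 2 + 12 * a * b + b ^+ 2) / 16 in
  if i == 1%N then (if (2 <= j <= 10)%N then e j.+1 else 0) else
  match i, j return 'rV[R]_11 with
  | 2%N, 3%N => e 5 + a *: e 6
  | 2%N, 4%N => e 6 + a *: e 7
  | 2%N, 5%N => - e 7 + (a - b) *: e 8
  | 2%N, 6%N => - (3 *: e 8) + (a - 2 * b) *: e 9
  | 2%N, 7%N => - (2 *: e 9) - ((5 * a + 7 * b) / 4) *: e 10 + q *: e 11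
  | 2%N, 8%N => 2 *: e 10 - ((23 * a + b) / 4) *: e 11
  | 2%N, 9%N => - e 11
  | 3%N, 4%N => 2 *: e 7 + b *: e 8
  | 3%N, 5%N => 2 *: e 8 + b *: e 9
  | 3%N, 6%N => - e 9 + ((9 * a - b) / 4) *: e 10 - q *: e 11
  | 3%N, 7%N => - (4 *: e 10) + (3 * (3 * a - b) / 2) *: e 11
  | 3%N, 8%N => 3 *: e 11
  | 4%N, 5%N => 3 *: e 9 - ((9 * a - 5 * b) / 4) *: e 10 + q *: e 11
  | 4%N, 6%N => 3 *: e 10 - ((9 * a - 5 * b) / 4) *: e 11
  | 4%N, 7%N => - (7 *: e 11)
  | 5%N, 6%N => 10 *: e 11
  | _, _ => 0
  end.

Definition br_basis {R : realFieldType} (a b : R) (i j : nat) : 'rV[R]_11 :=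
  if (i < j)%N then br_up a b i j
  else if (j < i)%N then - br_up a b j i else 0.

Definition lie_br {R : realFieldType} (a b : R) (x y : 'rV[R]_11) : 'rV[R]_11 :=
  \sum_(i < 11) \sum_(j < 11) (x 0 i * y 0 j) *: br_basis a b i.+1 j.+1.

Definition ell {R : realFieldType} (v : 'rV[R]_11) : R := v 0 (inord 10).

Definition stabilizer {R : realFieldType} (a b : R) (l : 'rV[R]_11 -> R)
  (y : 'rV[R]_11) : Prop :=
  forall x : 'rV[R]_11, l (lie_br a b x y) = 0.

Definition in_center_span {R : realFieldType} (y : 'rV[R]_11) : Prop :=
  exists t : R, y = t *: basis 11.

(* Main.v *)
Require Import Defs.
From HB Require Import structures.
From mathcomp Require Import all_boot all_order all_algebra.
From mathcomp Require Import lra.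
Import Order.TTheory GRing.Theory Num.Theory.
Local Open Scope ring_scope.
Lemma inE10 k : (k < 11)%N -> (inord 10 == inord k :> 'I_11) = (10 == k)%N.
Proof. by move=> h; rewrite -val_eqE /= !inordK. Qed.

Lemma sum11 (V : zmodType) (F : 'I_11 -> V) : \sum_j F j =
  F (inord 0) + F (inord 1) + F (inord 2) + F (inord 3) + F (inord 4) + F (inord 5)
  + F (inord 6) + F (inord 7) + F (inord 8) + F (inord 9) + F (inord 10).
Proof.
rewrite !big_ord_recl big_ord0 addr0 !addrA.
by do !congr (_ + _); congr F; apply/val_inj; rewrite /= inordK.
Qed.

Lemma ell_lie (R : realFieldType) (a b : R) x y : ell (lie_br a b x y) =
  \sum_(i < 11) \sum_(j < 11) x 0 i * y 0 j * ell (br_basis a b i.+1 j.+1).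
Proof.
rewrite /ell /lie_br summxE. apply eq_bigr => i _; rewrite summxE.
by apply eq_bigr => j _; rewrite mxE.
Qed.

Lemma ell_lie_basis (R : realFieldType) (a b : R) k y : (0 < k <= 11)%N ->
  ell (lie_br a b (basis k) y) =
  \sum_(j < 11) y 0 j * ell (br_basis a b k j.+1).
Proof.
move=> /andP[k0 k11].
rewrite ell_lie (bigD1 (inord k.-1)) //= [X in _ + X]big1 ?addr0.
  apply: eq_bigr => j _; rewrite /basis mxE !eqxx /= mul1r inordK; last first.
    by rewrite prednK.
  by rewrite prednK.
move=> i /negPf hi; apply: big1 => j _.
by rewrite /basis mxE eqxx /= hi !mul0r.
Qed.

Ltac cE := rewrite /br_basis /br_up /ell /= ?inordK //= ?mxE ?inE10 //=
  ?(mulr0,mulr1,addr0,add0r,oppr0,mul0r,subr0,sub0r,opprK, scaler0).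

Lemma br11 (R : realFieldType) (a b : R) n : br_basis a b n 11 = 0.
Proof.
do 12!(case: n => [|n]; first by rewrite /br_basis /br_up /= ?oppr0).
by rewrite /br_basis /br_up /= oppr0.
Qed.

Theorem proposition4p3 (R : realFieldType) (a b : R) (y : 'rV[R]_11) :
  stabilizer a b ell y <-> in_center_span y.
Proof.
split; last first.
  move=> [t ->] x; rewrite ell_lie big1 // => i _; apply: big1 => j _.
  rewrite /basis !mxE eqxx /=; case: (eqVneq j (inord 10)) => [->|hj].
    by rewrite inordK // br11 /ell mxE !mulr0.
  by rewrite !(mulr0, mul0r).
move=> H.
have := H (basis 1); rewrite ell_lie_basis // sum11; cE => h1.
have := H (basis 2); rewrite ell_lie_basis // sum11; cE => h2.
have := H (basis 3); rewrite ell_lie_basis // sum11; cE => h3.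
have := H (basis 4); rewrite ell_lie_basis // sum11; cE => h4.
have := H (basis 5); rewrite ell_lie_basis // sum11; cE => h5.
have := H (basis 6); rewrite ell_lie_basis // sum11; cE => h6.
have := H (basis 7); rewrite ell_lie_basis // sum11; cE => h7.
have := H (basis 8); rewrite ell_lie_basis // sum11; cE => h8.
have := H (basis 9); rewrite ell_lie_basis // sum11; cE => h9.
have := H (basis 10); rewrite ell_lie_basis // sum11; cE => h10.
have z0 : y 0 (inord 0) = 0 by move: h10; lra.
have z1 : y 0 (inord 1) = 0 by [].
have z9 : y 0 (inord 9) = 0 by [].
have z2 : y 0 (inord 2) = 0 by move: h8; rewrite z1 !mul0r !add0r; lra.
have z3 : y 0 (inord 3) = 0 by move: h7; rewrite z1 z2 !mul0r !add0r; lra.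
have z4 : y 0 (inord 4) = 0 by move: h6; rewrite z2 z3 !mul0r !add0r; lra.
have z5 : y 0 (inord 5) = 0 by move: h5; rewrite z3 !mul0r !add0r; lra.
have z6 : y 0 (inord 6) = 0 by move: h4; rewrite z4 z5 !mul0r !add0r; lra.
have z7 : y 0 (inord 7) = 0 by move: h3; rewrite z5 z6 !mul0r !add0r; lra.
have z8 : y 0 (inord 8) = 0 by move: h2; rewrite z6 z7 !mul0r !add0r; lra.
exists (y 0 (inord 10)).
rewrite {1}(row_sum_delta y) sum11 z0 z1 z2 z3 z4 z5 z6 z7 z8 z9 !scale0r !add0r.
by [].
Qed.
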